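(* Let $A\in\mathbb{R}^{n\times n}$ be monotone (nonsingular with $A^{-1}\geq 0$) and let $(U_k,V_k,E_k)_{k=1}^{p}$ be a weak regular multisplitting of $A$. Let $H=\sum_{k=1}^{p}E_kU_k^{-1}V_k$. Let $\underline{U},\overline{U}\in\mathbb{R}^{n\times n}$ be nonsingular with $\overline{U}^{-1}\leq U_k^{-1}\leq\underline{U}^{-1}$ for each $k=1,\ldots,p$. (i) If $A=\overline{U}-\overline{V}$ is a regular splitting, then $\rho(H)\leq\rho(\overline{U}^{-1}\overline{V})$. (ii) If $A=\underline{U}-\underline{V}$ is a regular splitting, then $\rho(\underline{U}^{-1}\underline{V})\leq\rho(H)$.
   Context: Inequalities are entrywise; $\rho(\cdot)$ is the spectral radius. A splitting $A=U-V$ of $A\in\mathbb{R}^{n\times n}$ is weak regular if $U$ is nonsingular, $U^{-1}\geq 0$ and $U^{-1}V\geq 0$, and regular if $U$ is nonsingular, $U^{-1}\geq 0$ and $V\geq 0$. A weak regular multisplitting of $A$ is a triplet $(U_k,V_k,E_k)_{k=1}^{p}$ where each $A=U_k-V_k$ is a weak regular splitting and each $E_k\geq 0$ is an $n\times n$ diagonal matrix with $\sum_{k=1}^{p}E_k=I$. *)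

(* Defs.v *)
From HB Require Import structures.
From mathcomp Require Import all_boot all_order all_algebra.
From mathcomp Require Import complex.
From mathcomp Require Import reals.
Set Implicit Arguments. Unset Strict Implicit. Unset Printing Implicit Defensive.
Import Order.TTheory GRing.Theory Num.Theory.
Local Open Scope ring_scope.

Section Defs.
Variable R : rcfType.
Variable n : nat.

Definition mx_le (B C : 'M[R]_n) : Prop := forall i j, B i j <= C i j.
Definition mx_nonneg (B : 'M[R]_n) : Prop := forall i j, 0 <= B i j.

(* complex eigenvalues (with multiplicity) of a real matrix: the roots of its
   characteristic polynomial over the algebraically closed field R[i] *)
Definition eigenvalues (B : 'M[R]_n) : seq R[i] :=
  sval (closed_field_poly_normal (char_poly (map_mx (fun x : R => x%:C%C) B))).

Definition spectral_radius (B : 'M[R]_n) : R :=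
  \big[Num.max/0]_(z <- eigenvalues B) ComplexField.Normc.normc z.

Definition monotone (B : 'M[R]_n) : Prop :=
  B \in unitmx /\ mx_nonneg (invmx B).

Definition weak_regular_splitting (B U V : 'M[R]_n) : Prop :=
  B = U - V /\ U \in unitmx /\ mx_nonneg (invmx U) /\ mx_nonneg (invmx U *m V).

Definition regular_splitting (B U V : 'M[R]_n) : Prop :=
  B = U - V /\ U \in unitmx /\ mx_nonneg (invmx U) /\ mx_nonneg V.

Definition weak_regular_multisplitting (p : nat) (B : 'M[R]_n)
    (U V E : 'I_p -> 'M[R]_n) : Prop :=
  (forall k, weak_regular_splitting B (U k) (V k)) /\
  (forall k, is_diag_mx (E k)) /\
  (forall k, mx_nonneg (E k)) /\
  \sum_(k < p) E k = 1%:M.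
End Defs.

(* Main.v *)
Require Import Defs.
From HB Require Import structures.
From mathcomp Require Import all_boot all_order all_algebra.
From mathcomp Require Import complex.
From mathcomp Require Import reals.
From mathcomp Require Import polyrcf.
From mathcomp Require Import ring lra.
From mathcomp Require Import classical_sets.
Set Implicit Arguments. Unset Strict Implicit. Unset Printing Implicit Defensive.
Import Order.TTheory GRing.Theory Num.Theory.
Local Open Scope ring_scope.

Section Base.
Variable R : realType.

Definition nn a b (M : 'M[R]_(a, b)) := forall i j, 0 <= M i j.
Definition mle a b (M N : 'M[R]_(a, b)) := forall i j, M i j <= N i j.

Lemma nn_mul a b c (M : 'M[R]_(a, b)) (N : 'M[R]_(b, c)) : nn M -> nn N -> nn (M *m N).
Proof. by move=> hM hN i j; rewrite mxE; apply: sumr_ge0 => k _; apply: mulr_ge0. Qed.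

Lemma mle_mull a b c (C : 'M[R]_(a, b)) (M N : 'M[R]_(b, c)) :
  nn C -> mle M N -> mle (C *m M) (C *m N).
Proof. by move=> hC h i j; rewrite !mxE; apply: ler_sum => k _; apply: ler_wpM2l. Qed.

Lemma mle_mulr a b c (C : 'M[R]_(b, c)) (M N : 'M[R]_(a, b)) :
  nn C -> mle M N -> mle (M *m C) (N *m C).
Proof. by move=> hC h i j; rewrite !mxE; apply: ler_sum => k _; apply: ler_wpM2r. Qed.

Lemma half_le0 (m : R) : m <= m / 2 -> m <= 0.
Proof. by move=> h; lra. Qed.


Lemma inv_small (n : nat) (D : 'M[R]_n) : nn D -> (forall i, \sum_k D i k <= 1/2) ->
  (1%:M - D) \in unitmx /\ nn (invmx (1%:M - D)).
Proof.
move=> hD hs.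
have hu : (1%:M - D) \in unitmx.
  rewrite unitmxE unitfE -det_tr; apply/negP => /det0P [v vn0 hv].
  move: hv; rewrite linearB /= tr_scalar_mx mulmxBr mulmx1 => /eqP; rewrite subr_eq0 => /eqP hv.
  set m := \big[Num.max/0]_(j < n) `|v 0 j|.
  have m0 : 0 <= m by apply: bigmax_ge_id.
  have hj : forall j, `|v 0 j| <= m / 2.
    move=> j; rewrite hv mxE; apply: (le_trans (ler_norm_sum _ _ _)).
    apply: (@le_trans _ _ (\sum_i m * D j i)).
      apply: ler_sum => i _; rewrite mxE normrM (ger0_norm (hD _ _)).
      by apply: ler_wpM2r => //; apply: le_bigmax.
    rewrite -mulr_sumr; apply: (@le_trans _ _ (m * (1/2))); first by apply: ler_wpM2l.
    lra.
  have : m <= m / 2 by apply: bigmax_le => //; lra.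
  move=> /half_le0 hm; move/negP: vn0; apply; apply/eqP/rowP => j; rewrite mxE.
  apply/eqP; rewrite -normr_le0; apply: le_trans (hj j) _; lra.
split => //.
set X := invmx (1%:M - D).
have hX : X = 1%:M + D *m X.
  have := mulmxV hu; rewrite -/X mulmxBl mul1mx => /eqP; rewrite subr_eq => /eqP //.
set m := \big[Num.max/0]_(ij : 'I_n * 'I_n) (- X ij.1 ij.2).
have m0 : 0 <= m by apply: bigmax_ge_id.
have hij : forall i j, - X i j <= m / 2.
  move=> i j; rewrite hX !mxE opprD.
  have h1 : - ((i == j)%:R : R) <= 0 by rewrite oppr_le0 ler0n.
  rewrite -[_ / 2]add0r; apply: lerD => //.
  rewrite -sumrN; apply: (@le_trans _ _ (\sum_k D i k * m)).
    apply: ler_sum => k _; rewrite -mulrN; apply: ler_wpM2l => //.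
    by apply: (le_bigmax 0 (fun ij : 'I_n * 'I_n => - X ij.1 ij.2) (k, j)).
  rewrite -mulr_suml; apply: (@le_trans _ _ (1/2 * m)); first by apply: ler_wpM2r.
  lra.
have : m <= m / 2 by apply: bigmax_le; [lra | move=> [i j] _; apply: hij].
move=> /half_le0 hm i j; have := hij i j; lra.
Qed.


Lemma inv_small_eps (n : nat) (C : 'M[R]_n) : nn C ->
  exists2 d : R, 0 < d & forall e, 0 <= e -> e < d ->
    (1%:M - e *: C) \in unitmx /\ nn (invmx (1%:M - e *: C)).
Proof.
move=> hC; set S := \sum_i \sum_k C i k.
have S0 : 0 <= S by apply: sumr_ge0 => i _; apply: sumr_ge0 => k _; apply: hC.
exists (1 / (2 * (S + 1))); first by apply: divr_gt0 => //; lra.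
move=> e e0 ed; apply: inv_small.
  by move=> i j; rewrite mxE; apply: mulr_ge0.
move=> i.
have hi : \sum_k C i k <= S.
  rewrite /S [X in _ <= X](bigD1 i) //= lerDl.
  by apply: sumr_ge0 => l _; apply: sumr_ge0 => k _; apply: hC.
have hiS : 0 <= \sum_k C i k by apply: sumr_ge0 => k _; apply: hC.
rewrite (eq_bigr (fun k => e * C i k)); last by move=> k _; rewrite mxE.
rewrite -mulr_sumr.
have h2 : e * (2 * (S + 1)) < 1.
  by move: ed; rewrite ltr_pdivlMr //; lra.
apply: (@le_trans _ _ (e * S)); first by apply: ler_wpM2l.
have : e * S <= e * (S + 1) by apply: ler_wpM2l => //; lra.
nra.
Qed.

End Base.

Section Spec.
Variable R : realType.
Local Notation nc := (@ComplexField.Normc.normc R).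
Local Notation toC := (fun x : R => x%:C%C).

Lemma normcC (x : R[i]) : (nc x)%:C%C = `|x|.
Proof. by case: x. Qed.

Lemma rho_ge0 n (B : 'M[R]_n) : 0 <= spectral_radius B.
Proof. exact: bigmax_ge_id. Qed.

Lemma eig_le_rho n (B : 'M[R]_n) z : z \in eigenvalues B -> nc z <= spectral_radius B.
Proof. by move=> h; rewrite /spectral_radius; exact: (le_bigmax_seq 0 z predT nc h). Qed.

Lemma rho_attained n (B : 'M[R]_n) : 0 < spectral_radius B ->
  exists2 z, z \in eigenvalues B & nc z = spectral_radius B.
Proof.
rewrite /spectral_radius; elim: (eigenvalues B) => [|a s IH]; first by rewrite big_nil ltxx.
rewrite big_cons; have [h|h] := leP (\big[Num.max/0]_(z <- s) nc z) (nc a).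
  by move=> _; exists a => //; rewrite inE eqxx.
by move=> /IH [z zs <-]; exists z => //; rewrite inE zs orbT.
Qed.

Lemma mem_eig n (B : 'M[R]_n) z :
  (z \in eigenvalues B) = root (char_poly (map_mx toC B)) z.
Proof.
rewrite /eigenvalues; case: closed_field_poly_normal => r /= hr.
by rewrite hr (monicP (char_poly_monic _)) scale1r root_prod_XsubC.
Qed.

Lemma unit_gt_rho n (B : 'M[R]_n) t : spectral_radius B < t -> (t%:M - B) \in unitmx.
Proof.
move=> ht; apply/negPn/negP => hn.
have hd : \det (map_mx toC (t%:M - B)) == 0.
  by move: hn; rewrite unitmxE unitfE negbK => /eqP h; rewrite det_map_mx h rmorph0.
move: hd; rewrite map_mxB /= map_scalar_mx /= => /det0P [v vn0 hv].
have he : eigenvalue (map_mx toC B) t%:C%C.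
  apply/eigenvalueP; exists v => //; apply/eqP; rewrite -subr_eq0 -mul_mx_scalar -mulmxBr.
  by rewrite -opprB mulmxN oppr_eq0; apply/eqP; exact: hv.
move: he; rewrite eigenvalue_root_char -mem_eig => /eig_le_rho.
rewrite /= expr0n /= addr0 sqrtr_sqr => h.
have := ler_norm t; lra.
Qed.


Lemma nc_real (x : R) : nc x%:C%C = `|x|.
Proof. by rewrite /= expr0n /= addr0 sqrtr_sqr. Qed.

Lemma nc_ge0 (x : R[i]) : 0 <= nc x.
Proof. by case: x => a b; apply: sqrtr_ge0. Qed.

Lemma eig_vec n (B : 'M[R]_n) z : (forall i j, 0 <= B i j) -> z \in eigenvalues B ->
  exists y : 'rV[R]_n,
    [/\ (forall j, 0 <= y 0 j), y != 0 & forall j, nc z * y 0 j <= (y *m B) 0 j].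
Proof.
move=> hB; rewrite mem_eig -eigenvalue_root_char => /eigenvalueP [v hv vn0].
exists (\row_j nc (v 0 j)); split.
- by move=> j; rewrite mxE; apply: nc_ge0.
- apply/negP => /eqP h0; move/negP: vn0; apply; apply/eqP/rowP => j.
  move/rowP: h0 => /(_ j); rewrite !mxE => /ComplexField.Normc.eq0_normc //.
- move=> j; rewrite !mxE -ComplexField.Normc.normcM.
  have -> : z * v 0 j = (v *m map_mx toC B) 0 j by rewrite hv !mxE.
  rewrite -lecR normcC mxE rmorph_sum /=.
  apply: le_trans (ler_norm_sum _ _ _) _; apply: ler_sum => i _.
  rewrite !mxE normrM -normcC rmorphM /=; apply: ler_wpM2l.
    by rewrite -[0]/(0%:C%C) lecR; apply: nc_ge0.
  by rewrite -normcC nc_real ger0_norm.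
Qed.


Lemma horner_cpmx n (B : 'M[R]_n) s : map_mx (horner_eval s) (char_poly_mx B) = s%:M - B.
Proof. apply/matrixP => i j; rewrite !mxE /horner_eval /=. by rewrite hornerD hornerN hornerMn hornerX hornerC. Qed.

Lemma adj_ev n (B : 'M[R]_n) s i j : ((\adj (char_poly_mx B)) i j).[s] = \adj (s%:M - B) i j.
Proof. rewrite -horner_cpmx -map_mx_adj. rewrite [in RHS]/map_mx [in RHS]mxE. done. Qed.

Lemma det_ev n (B : 'M[R]_n) s : (char_poly B).[s] = \det (s%:M - B).
Proof. by rewrite -horner_cpmx det_map_mx. Qed.

Lemma sign_inv (a d : R) : d != 0 -> (0 <= d^-1 * a) = (0 <= a * d).
Proof.
move=> d0; have -> : d^-1 * a = (a * d) * (d^-1 * d^-1) by field.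
by rewrite pmulr_lge0 // lt0r mulf_neq0 ?invr_eq0 // -expr2 sqr_ge0.
Qed.


Lemma inv_nn_gt_rho n (B : 'M[R]_n) t : nn B -> spectral_radius B < t ->
  nn (invmx (t%:M - B)).
Proof.
move=> hB ht.
set rho := spectral_radius B.
pose f i j := (\adj (char_poly_mx B)) i j * char_poly B.
pose good s := [forall i, [forall j, 0 <= (f i j).[s]]].
have goodP : forall s, rho < s -> reflect (nn (invmx (s%:M - B))) (good s).
  move=> s hs; have hu := unit_gt_rho hs.
  have hd : \det (s%:M - B) != 0 by rewrite -unitfE -unitmxE.
  have key : forall i j, (0 <= invmx (s%:M - B) i j) = (0 <= (f i j).[s]).
    by move=> i j; rewrite /invmx hu mxE hornerM adj_ev det_ev sign_inv.
  apply: (iffP forallP) => [h i j | h i].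
    by rewrite key; move/forallP: (h i) => /(_ j).
  by apply/forallP => j; rewrite -key.
apply/(goodP t ht); apply/negPn/negP => hnt.
pose E := fun s => rho < s /\ ~~ good s.
have [d d0 hd] := inv_small_eps hB.
have rho0 : 0 <= rho by apply: rho_ge0.
set T := rho + d^-1.
have hT : forall s, T < s -> good s.
  move=> s hs.
  have di0 : 0 < d^-1 by rewrite invr_gt0.
  have s0 : 0 < s by rewrite /T in hs; lra.
  have rs : rho < s by rewrite /T in hs; lra.
  apply/(goodP s rs).
  have hsd : s^-1 < d.
    rewrite (@invf_plt _ s d) ?posrE //; rewrite /T in hs; lra.
  have si0 : 0 <= s^-1 by rewrite invr_ge0 ltW.
  have [hu1 hn1] := hd s^-1 si0 hsd.
  have eq : s%:M - B = s *: (1%:M - s^-1 *: B).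
    by rewrite scalerBr scalerA mulfV ?gt_eqF // scale1r scalemx1.
  rewrite eq invmxZ; last by rewrite unitmxZ // unitfE gt_eqF.
  by move=> i j; rewrite mxE; apply: mulr_ge0; [rewrite invr_ge0 ltW | apply: hn1].
have hsup : has_sup E.
  split; first by exists t; split => //; apply/negP.
  exists T => s [hs hg]; rewrite leNgt; apply/negP => hTs; move/negP: hg; apply; exact: hT.
set ts := sup E.
have ubE : forall s, E s -> s <= ts by move=> s Es; exact: (sup_upper_bound hsup Es).
have tts : t <= ts by apply: ubE; split => //; apply/negP.
have hts : rho < ts by apply: lt_le_trans tts.
have above : forall s, ts < s -> good s.
  move=> s hs; have rs : rho < s by apply: lt_trans hs.
  apply/negPn/negP => hg.
  have : s <= ts by apply: ubE; split => //; apply/negP.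
  by rewrite leNgt hs.
have gts : good ts.
  apply/forallP => i; apply/forallP => j; rewrite leNgt; apply/negP => hneg.
  have e0 : 0 < - (f i j).[ts] by rewrite oppr_gt0.
  have [dd dd0 hdd] := poly_cont ts (f i j) e0.
  have h1 := hdd (ts + dd / 2).
  have h2 : `|ts + dd / 2 - ts| < dd by rewrite addrAC subrr add0r ger0_norm; lra.
  have h3 := h1 h2.
  have : ts < ts + dd / 2 by lra.
  move/above/forallP/(_ i)/forallP/(_ j) => h4.
  have := ler_norm ((f i j).[ts + dd / 2] - (f i j).[ts]); lra.
move/(goodP ts hts): gts => nnts.
set Rs := invmx (ts%:M - B).
have [dl dl0 hdl] := inv_small_eps nnts.
have dl'0 : 0 < Num.min dl (ts - rho) by rewrite lt_min dl0 subr_gt0 hts.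
have [s Es hs] := sup_adherent dl'0 hsup.
rewrite -/ts in hs.
have sts : s <= ts by apply: ubE.
set e := ts - s.
have e0 : 0 <= e by rewrite /e subr_ge0.
have hmin1 : Num.min dl (ts - rho) <= dl by rewrite ge_min lexx.
have hmin2 : Num.min dl (ts - rho) <= ts - rho by rewrite ge_min lexx orbT.
have edl : e < dl by rewrite /e; lra.
have rs : rho < s by lra.
have [hu1 hn1] := hdl e e0 edl.
have hMu := unit_gt_rho hts.
have eqM : s%:M - B = (ts%:M - B) *m (1%:M - e *: Rs).
  rewrite mulmxBr mulmx1 -scalemxAr mulmxV // scalemx1.
  apply/matrixP => i j; rewrite !mxE /e.
  by case: (i == j) => /=; rewrite ?mulr1n ?mulr0n; ring.
have hsu := unit_gt_rho rs.
have hinv : invmx (s%:M - B) = invmx (1%:M - e *: Rs) *m Rs.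
  have h1 : (s%:M - B) *m (invmx (1%:M - e *: Rs) *m Rs) = 1%:M.
    by rewrite eqM -mulmxA (mulmxA (1%:M - e *: Rs)) mulmxV // mul1mx mulmxV.
  by rewrite -[RHS](mulKmx hsu) h1 mulmx1.
have : nn (invmx (s%:M - B)) by rewrite hinv; apply: nn_mul.
move/(goodP s rs); case: Es => _ /negP; exact.
Qed.


Lemma lcw_row n (B : 'M[R]_n) (x : 'rV[R]_n) mu : nn B -> (forall j, 0 <= x 0 j) ->
  x != 0 -> (forall j, mu * x 0 j <= (x *m B) 0 j) -> mu <= spectral_radius B.
Proof.
move=> hB hx xn0 hmu; rewrite leNgt; apply/negP => hlt.
have hR := inv_nn_gt_rho hB hlt; have hu := unit_gt_rho hlt.
set w := x *m (mu%:M - B).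
have hw : forall j, w 0 j <= 0.
  move=> j; have := hmu j; rewrite /w mulmxBr mul_mx_scalar !mxE subr_le0; exact: id.
have hxw : x = w *m invmx (mu%:M - B) by rewrite /w mulmxK.
move/negP: xn0; apply; apply/eqP/rowP => j; rewrite mxE.
apply/eqP; rewrite eq_le hx andbT hxw mxE.
apply: sumr_le0 => k _; rewrite mulrC; apply: mulr_ge0_le0 => //; exact: hR.
Qed.

Lemma char_poly_tr n (A : 'M[R[i]]_n) : char_poly A^T = char_poly A.
Proof.
rewrite /char_poly /char_poly_mx.
have -> : ('X%:M - map_mx polyC A^T) = ('X%:M - map_mx polyC A)^T by rewrite linearB /= tr_scalar_mx map_trmx.
by rewrite det_tr. Qed.

Lemma rho_tr n (B : 'M[R]_n) : spectral_radius B^T = spectral_radius B.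
Proof.
rewrite /spectral_radius /eigenvalues.
have -> : char_poly (map_mx toC B^T) = char_poly (map_mx toC B) by rewrite -map_trmx char_poly_tr.
by [].
Qed.

Lemma lcw_col n (B : 'M[R]_n) (x : 'cV[R]_n) mu : nn B -> (forall j, 0 <= x j 0) ->
  x != 0 -> (forall j, mu * x j 0 <= (B *m x) j 0) -> mu <= spectral_radius B.
Proof.
move=> hB hx xn0 hmu; rewrite -rho_tr; apply: (@lcw_row _ _ x^T).
- by move=> i j; rewrite mxE.
- by move=> j; rewrite mxE.
- by apply: contra xn0 => /eqP h; apply/eqP; rewrite -[x]trmxK h trmx0.
- by move=> j; rewrite -trmx_mul [(B *m x)^T 0 j]mxE [x^T 0 j]mxE; apply: hmu.
Qed.


Lemma eig_tr n (B : 'M[R]_n) : eigenvalues B^T = eigenvalues B.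
Proof.
rewrite /eigenvalues.
have -> : char_poly (map_mx toC B^T) = char_poly (map_mx toC B) by rewrite -map_trmx char_poly_tr.
by [].
Qed.

Lemma perron_row n (B : 'M[R]_n) : nn B -> 0 < spectral_radius B ->
  exists y : 'rV[R]_n,
    [/\ (forall j, 0 <= y 0 j), y != 0 & forall j, spectral_radius B * y 0 j <= (y *m B) 0 j].
Proof.
move=> hB /rho_attained [z hz <-]; exact: eig_vec.
Qed.

Lemma perron_col n (B : 'M[R]_n) : nn B -> 0 < spectral_radius B ->
  exists x : 'cV[R]_n,
    [/\ (forall j, 0 <= x j 0), x != 0 & forall j, spectral_radius B * x j 0 <= (B *m x) j 0].
Proof.
move=> hB; rewrite -rho_tr => /rho_attained [z hz <-].
have hBt : nn B^T by move=> i j; rewrite mxE.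
have [y [hy yn0 hyB]] := eig_vec hBt hz.
exists y^T; split.
- by move=> j; rewrite mxE.
- by apply: contra yn0 => /eqP h; apply/eqP; rewrite -[y]trmxK h trmx0.
- move=> j; have := hyB j; rewrite -[B in B *m _]trmxK -trmx_mul.
  by rewrite [(B *m y^T)^T 0 j]mxE [y^T j 0]mxE.
Qed.

End Spec.

Unset Implicit Arguments.
Set Strict Implicit.

Theorem corollary5p10 (R : realType) (n p : nat) (A : 'M[R]_n)
    (U V E : 'I_p -> 'M[R]_n) (Ulow Uup : 'M[R]_n) :
  monotone A ->
  weak_regular_multisplitting A U V E ->
  Ulow \in unitmx -> Uup \in unitmx ->
  (forall k, mx_le (invmx Uup) (invmx (U k)) /\ mx_le (invmx (U k)) (invmx Ulow)) ->
  let H := \sum_(k < p) (E k *m (invmx (U k) *m V k)) in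
  (forall Vup : 'M[R]_n, regular_splitting A Uup Vup ->
     spectral_radius H <= spectral_radius (invmx Uup *m Vup)) /\
  (forall Vlow : 'M[R]_n, regular_splitting A Ulow Vlow ->
     spectral_radius (invmx Ulow *m Vlow) <= spectral_radius H).
Proof.
move=> [Au hAi] [hspl [hdiag [hEnn hEsum]]] hUlow hUup hbnd H.
set Ai := invmx A.
set P := \sum_(k < p) (E k *m invmx (U k)).
have hH : H = 1%:M - P *m A.
  rewrite /H /P mulmx_suml -hEsum -sumrB; apply: eq_bigr => k _.
  have [eA [uU _]] := hspl k.
  have -> : V k = U k - A by rewrite eA opprB addrC subrK.
  by rewrite mulmxBr mulVmx // mulmxBr mulmx1 mulmxA.
have hHnn : nn H.
  move=> i j; rewrite /H summxE; apply: sumr_ge0 => k _; apply: nn_mul; first exact: hEnn.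
  by have [_ [_ [_ h]]] := hspl k.
have hEi : forall i, \sum_k E k i i = 1.
  by move=> i; have := congr1 (fun M : 'M[R]_n => M i i) hEsum; rewrite /= summxE mxE eqxx.
have hPe : forall i j, P i j = \sum_k E k i i * invmx (U k) i j.
  move=> i j; rewrite /P summxE; apply: eq_bigr => k _; rewrite mxE (bigD1 i) //= big1 ?addr0 //.
  move=> l hl; have /is_diag_mxP -> := hdiag k; first by rewrite mul0r.
  by rewrite eq_sym.
have hPb : forall i j, invmx Uup i j <= P i j /\ P i j <= invmx Ulow i j.
  move=> i j; rewrite hPe; split.
    rewrite -[invmx Uup i j]mul1r -(hEi i) mulr_suml; apply: ler_sum => k _.
    by apply: ler_wpM2l; [apply: hEnn | case: (hbnd k) => h _; apply: h].
  rewrite -[invmx Ulow i j]mul1r -(hEi i) mulr_suml; apply: ler_sum => k _.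
  by apply: ler_wpM2l; [apply: hEnn | case: (hbnd k) => _ h; apply: h].
have hAiA : Ai *m A = 1%:M by rewrite mulVmx.
have hAAi : A *m Ai = 1%:M by rewrite mulmxV.
split.
- move=> Vup [eA [_ [hQnn hVnn]]].
  set Q := invmx Uup.
  have hT2 : nn (Q *m Vup) by apply: nn_mul.
  have [l0|lpos] := leP (spectral_radius H) 0.
    by apply: le_trans l0 _; apply: rho_ge0.
  set l := spectral_radius H.
  have [y [hy yn0 hyH]] := perron_row hHnn lpos.
  rewrite -/l in hyH.
  have hyn : nn y by move=> i j; rewrite (ord1 i).
  set z := y *m Ai.
  have hz : nn z by apply: nn_mul.
  have c1 : mle (y *m P) ((1 - l) *: z).
    have -> : y *m P = (y - y *m H) *m Ai.
      by rewrite hH mulmxBr mulmx1 opprB addrC subrK -mulmxA -[P in LHS](mulmxK Au) mulmxA.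
    rewrite /z scalemxAl; apply: mle_mulr => // i j.
    move: (hyH j); rewrite (ord1 i) !mxE => h; lra.
  have c2 : mle (y *m Q) (y *m P).
    by apply: mle_mull => // i j; case: (hPb i j).
  have c3 : z *m Vup *m Q = z - y *m Q.
    have -> : Vup = Uup - A by rewrite eA opprB addrC subrK.
    by rewrite mulmxBr mulmxBl -mulmxA mulmxV // mulmx1 /z -(mulmxA y Ai A) hAiA mulmx1.
  have c4 : mle (l *: z) (z *m Vup *m Q).
    rewrite c3 => i j; have := c1 i j; have := c2 i j; rewrite !mxE; lra.
  set q := z *m Vup.
  have hq : nn q by apply: nn_mul.
  have c5 : mle (l *: q) (q *m (Q *m Vup)).
    by rewrite /q mulmxA scalemxAl; apply: mle_mulr.
  apply: (@lcw_row _ _ _ q); first exact: hT2.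
  + by move=> j; apply: hq.
  + apply/negP => /eqP q0.
    have z0 : z = 0.
      apply/rowP => j; rewrite [X in _ = X]mxE; apply/eqP; rewrite eq_le hz andbT.
      have := c4 0 j; rewrite -/q q0 !mul0mx !mxE => h.
      by rewrite -(pmulr_rle0 _ lpos).
    move/negP: yn0; apply; apply/eqP.
    by rewrite -[y]mulmx1 -hAiA mulmxA -/z z0 mul0mx.
  + by move=> j; have := c5 0 j; rewrite mxE.
- move=> Vlow [eA [_ [hQnn hVnn]]].
  set Q := invmx Ulow.
  have hT : nn (Q *m Vlow) by apply: nn_mul.
  have [l0|lpos] := leP (spectral_radius (Q *m Vlow)) 0.
    by apply: le_trans l0 _; apply: rho_ge0.
  set l := spectral_radius (Q *m Vlow).
  have [x [hx xn0 hTx]] := perron_col hT lpos.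
  rewrite -/l in hTx.
  have hxn : nn x by move=> i j; rewrite (ord1 j).
  set u := Vlow *m x.
  have hu : nn u by apply: nn_mul.
  set w := Ai *m u.
  have hAinn : nn Ai by [].
  have hw : nn w by apply: nn_mul.
  have hAw : A *m w = u by rewrite /w mulmxA hAAi mul1mx.
  have hHw : H *m w = w - P *m u by rewrite hH mulmxBl mul1mx -mulmxA hAw.
  have d1 : mle (P *m u) (Q *m u).
    by apply: mle_mulr => // i j; case: (hPb i j).
  have d2 : w - Q *m u = Ai *m Vlow *m (Q *m u).
    have -> : Vlow = Ulow - A by rewrite eA opprB addrC subrK.
    by rewrite mulmxBr mulmxBl hAiA mul1mx -mulmxA (mulmxA Ulow) mulmxV // mul1mx.
  have d3 : mle (l *: w) (Ai *m Vlow *m (Q *m u)).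
    rewrite /w /u (mulmxA Ai Vlow x) scalemxAr; apply: mle_mull; first by apply: nn_mul.
    by move=> i j; rewrite (ord1 j) mxE mulmxA; apply: hTx.
  apply: (@lcw_col _ _ _ w); first exact: hHnn.
  + by move=> j; apply: hw.
  + apply/negP => /eqP w0.
    have u0 : u = 0 by rewrite -hAw w0 mulmx0.
    move/negP: xn0; apply; apply/eqP/colP => j; rewrite mxE; apply/eqP.
    rewrite eq_le hx andbT.
    have := hTx j; rewrite -mulmxA -/u u0 mulmx0 mxE => h.
    by rewrite -(pmulr_rle0 _ lpos).
  + move=> j; rewrite hHw.
    have := d1 j 0; have := d3 j 0; rewrite -d2 !mxE; lra.
Qed.
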